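(* Let $(d,e;m)\in\mathcal{E}$ with $d\geq e$ be obstructive, i.e. there exists a rational $a\geq1$ with $\mu(d,e;m)(a)>\sqrt{a/2}$. Then either $e=d$ or $e=d-1$.
   Context: Weight expansion: for rational $a=p/q\geq1$ in lowest terms with continued fraction $[l_0;l_1,\dots,l_N]$ ($l_N\geq2$ if $N\geq1$), $w(a)=(1^{\times l_0},x_1^{\times l_1},\dots,x_N^{\times l_N})$ with $x_0=1$, $x_1=a-l_0$, $x_i=x_{i-2}-l_{i-1}x_{i-1}$; here $x^{\times l}$ is $x$ repeated $l$ times. One has $\sum w_i^2=a$. The set $\mathcal{E}$: a Cremona transform of an integer tuple $(\delta;n_1,\dots,n_k)$ with $n_1\geq\dots\geq n_k$ is $(2\delta-n_1-n_2-n_3;\delta-n_2-n_3,\delta-n_1-n_3,\delta-n_1-n_2,n_4,\dots,n_k)$; a Cremona move is a Cremona transform followed by a permutation of the entries after the semicolon. $\mathcal{E}$ consists of $(0,0;-1)$ together with all integer tuples $(d,e;m_1,\dots,m_M)$ with $d,e\geq0$, $m_1\geq\dots\geq m_M\geq0$, satisfying $\sum m_i=2(d+e)-1$, $\sum m_i^2=2de+1$, and such that $(d+e-m_1;d-m_1,e-m_1,m_2,\dots,m_M)$ reduces to $(0;-1,0,\dots,0)$ by repeated Cremona moves. $\mu(d,e;m)(a):=\langle m,w(a)\rangle/(d+e)$, with $\langle\cdot,\cdot\rangle$ the Euclidean scalar product after padding with zeros. *)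

(* Defs.v *)
From mathcomp Require Import all_boot all_algebra.
From mathcomp Require Import Rstruct.
From Stdlib Require Import Reals.
Set Implicit Arguments. Unset Strict Implicit. Unset Printing Implicit Defensive.
Import GRing.Theory Num.Theory.
Fixpoint cf_aux (fuel p q : nat) : seq nat :=
  match fuel with
  | 0 => [::]
  | fuel'.+1 => if q == 0%N then [::] else p %/ q :: cf_aux fuel' q (p %% q)
  end.

Local Open Scope ring_scope.

(* Continued fraction expansion of a rational a = p/q >= 1 in lowest terms
   (numq a, denq a are coprime, denq a > 0).  The fuel p+q+1 suffices. *)
Definition cfrac (a : rat) : seq nat :=
  let p := absz (numq a) in let q := absz (denq a) in cf_aux (p + q).+1 p q.

(* Weights: block x_i repeated l_i times, with x_{i+1} = x_{i-1} - l_i x_i,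
   started with x_{-1} = a, x_0 = 1 (so x_1 = a - l_0). *)
Fixpoint wexp_aux (xprev xcur : rat) (ls : seq nat) : seq rat :=
  match ls with
  | [::] => [::]
  | l :: ls' => nseq l xcur ++ wexp_aux xcur (xprev - l%:R * xcur) ls'
  end.

Definition weight_expansion (a : rat) : seq rat := wexp_aux a 1 (cfrac a).

(* Euclidean scalar product after padding with zeros (zip truncates, which is
   the same as padding with zeros). *)
Definition dotp (m : seq int) (w : seq rat) : rat :=
  \sum_(p <- zip m w) (p.1)%:~R * p.2.

Definition mu (d e : int) (m : seq int) (a : rat) : rat :=
  dotp m (weight_expansion a) / (d + e)%:~R.

Definition cremona_transform (x : int * seq int) : int * seq int :=
  let: (dl, n) := x in
  let n1 := nth 0 n 0 in let n2 := nth 0 n 1 in let n3 := nth 0 n 2 in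
  (2 * dl - n1 - n2 - n3,
   [:: dl - n2 - n3, dl - n1 - n3, dl - n1 - n2 & drop 3 n]).

Definition cremona_move (x y : int * seq int) : Prop :=
  exists n : seq int,
    [/\ perm_eq n x.2, sorted (fun u v : int => v <= u) n, (3 <= size n)%nat,
        y.1 = (cremona_transform (x.1, n)).1 &
        perm_eq y.2 (cremona_transform (x.1, n)).2].

Inductive cremona_reaches : int * seq int -> int * seq int -> Prop :=
  | cr_refl x : cremona_reaches x x
  | cr_step x y z : cremona_move x y -> cremona_reaches y z -> cremona_reaches x z.

Definition reduces_to_E0 (x : int * seq int) : Prop :=
  exists (k : nat) (y : int * seq int),
    [/\ cremona_reaches (x.1, x.2 ++ nseq k 0) y,
        y.1 = 0 &
        perm_eq y.2 ((-1) :: nseq (size y.2).-1 0)].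

Definition in_E (d e : int) (m : seq int) : Prop :=
  (d = 0 /\ e = 0 /\ m = [:: -1]) \/
  [/\ [/\ 0 <= d, 0 <= e, (0 < size m)%nat,
         sorted (fun u v : int => v <= u) m & all (fun u : int => 0 <= u) m],
      \sum_(i <- m) i = 2 * (d + e) - 1,
      \sum_(i <- m) i ^+ 2 = 2 * d * e + 1 &
      reduces_to_E0 (d + e - head 0 m,
                     [:: d - head 0 m, e - head 0 m & behead m])].

Definition obstructive (d e : int) (m : seq int) : Prop :=
  exists a : rat, 1 <= a /\ Num.sqrt (ratr a / 2 : R) < ratr (mu d e m a).

(* Main.v *)
Require Import Defs.
From mathcomp Require Import all_boot all_algebra.
From mathcomp Require Import Rstruct.
From Stdlib Require Import Reals.
From mathcomp Require Import ring lra zify.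
From Stdlib Require Import Lia.
From mathcomp Require Import order.
Import Order.TTheory GRing.Theory Num.Theory.
Local Open Scope ring_scope.

Lemma sq_sum_ge0 (w : seq rat) : 0 <= \sum_(x <- w) x ^+ 2.
Proof. by apply: sumr_ge0 => x _; apply: sqr_ge0. Qed.

Lemma cs_lem (m : seq int) (w : seq rat) (t : rat) :
  2 * t * dotp m w <= t ^+ 2 * \sum_(i <- m) (i%:~R : rat) ^+ 2 + \sum_(x <- w) x ^+ 2.
Proof.
elim: m w => [|x m IH] [|y w]; rewrite /dotp /= ?big_nil ?big_cons.
- by rewrite !mulr0 addr0.
- have := sq_sum_ge0 w; have := sqr_ge0 y; timeout 20 nra.
- have := sq_sum_ge0 [seq (i%:~R : rat) | i <- m]; rewrite big_map => h1.
  have := sqr_ge0 (x%:~R : rat); have := sqr_ge0 t; timeout 20 nra.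
- have := IH w; rewrite /dotp => h.
  have hs : 0 <= (t * x%:~R - y) ^+ 2 := sqr_ge0 _.
  rewrite /=; timeout 20 nra.
Qed.

Lemma wexp_sq fuel p q (c : rat) : 0 <= c ->
  \sum_(x <- wexp_aux (p%:R * c) (q%:R * c) (cf_aux fuel p q)) x ^+ 2
    <= p%:R * c * (q%:R * c).
Proof.
move=> hc; elim: fuel p q => [|f IH] p q /=.
  by rewrite big_nil; apply: mulr_ge0; apply: mulr_ge0.
case: eqP => [_|hq]; first by rewrite big_nil; apply: mulr_ge0; apply: mulr_ge0.
rewrite big_cat /= big_nseq.
have e1 : p%:R * c - (divn p q)%:R * (q%:R * c) = (modn p q)%:R * c.
  by rewrite {1}(div.divn_eq p q) natrD natrM; ring.
rewrite e1.
have h := IH q (modn p q).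
have -> : iter (divn p q) (+%R ((q%:R * c) ^+ 2)) 0 = (q%:R * c) ^+ 2 * (divn p q)%:R.
  elim: (divn p q) => [|n IHn]; first by rewrite mulr0.
  by rewrite iterS IHn mulrS; ring.
have hp : (p%:R : rat) = (divn p q)%:R * q%:R + (modn p q)%:R.
  by rewrite {1}(div.divn_eq p q) natrD natrM.
rewrite hp.
move: h.
set L := ((divn p q)%:R : rat). set Q := (q%:R : rat). set P := ((modn p q)%:R : rat).
set S := \sum_(_ <- _) _.
move=> h.
nra.
Qed.

Lemma wexp_le (a : rat) : 0 <= a ->
  \sum_(x <- weight_expansion a) x ^+ 2 <= a.
Proof.
move=> ha.
rewrite /weight_expansion /cfrac.
set p := absz (numq a). set q := absz (denq a).
have hq : (q%:R : rat) = (denq a)%:~R.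
  by rewrite /q natr_absz gtr0_norm ?denq_gt0.
have hp : (p%:R : rat) = (numq a)%:~R.
  by rewrite /p natr_absz ger0_norm ?numq_ge0.
have hq0 : (q%:R : rat) != 0 by rewrite hq intr_eq0 denq_neq0.
have e1 : a = p%:R * (q%:R)^-1 by rewrite hp hq divq_num_den.
have e2 : (1 : rat) = q%:R * (q%:R)^-1 by rewrite divff.
have := @wexp_sq (p + q).+1 p q (q%:R)^-1.
rewrite -e1 -e2 mulr1; apply.
by rewrite invr_ge0.
Qed.

Lemma sqrt_lt {K : rcfType} {x y : K} : 0 <= x -> Num.sqrt x < y -> 0 < y /\ x < y ^+ 2.
Proof.
move=> hx h.
have hs := sqr_sqrtr hx.
have hs0 := sqrtr_ge0 x.
move: h hs hs0; set s := Num.sqrt x => h1 h2 h3.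
split; timeout 20 nra.
Qed.

Theorem lemma4p5 (d e : int) (m : seq int) :
  in_E d e m -> e <= d -> obstructive d e m -> e = d \/ e = d - 1.
Proof.
move=> [[-> [-> ->]] | [[hd he _ _ _] hsum hsq _]] hed [a [ha hmu]]; first by left.
have ha0 : 0 < a by apply: lt_le_trans ha.
have hW := @wexp_le a (ltW ha0).
set w := weight_expansion a in hW.
set S := dotp m w.
set M := \sum_(i <- m) (i%:~R : rat) ^+ 2.
have hM : M = (2 * d * e + 1)%:~R.
  rewrite -hsq rmorph_sum /M; apply: eq_bigr => i _; by rewrite rmorphXn.
have hMpos : 0 < M by rewrite hM ltr0z; timeout 20 nia.
set D : rat := (d + e)%:~R.
have hmuE : mu d e m a = S / D by [].
set u := mu d e m a in hmu hmuE.
have h0 : 0 <= ratr a / 2 :> R by rewrite divr_ge0 // ler0q ltW.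
have hR := sqrt_lt h0 hmu.
case: hR => hu1 hu2.
have hu : 0 < u by rewrite -(ltr0q R).
have hu2' : a / 2 < u ^+ 2.
  rewrite -(ltr_rat R) rmorphXn fmorph_div rmorph_nat.
  by [].
have hD : D != 0.
  apply/eqP => hD0; move: hu; by rewrite hmuE hD0 invr0 mulr0 ltxx.
have hSu : S = u * D by rewrite hmuE mulfVK.
have hDpos : 0 < D.
  rewrite /D ltr0z lt_neqAle eq_sym; apply/andP; split; last by apply: addr_ge0.
  by move: hD; rewrite /D intr_eq0.
have hcs := cs_lem m w (S / M).
have ht : S / M * M = S by rewrite mulfVK // gt_eqF.
have hSM : S ^+ 2 <= M * a.
  move: hcs ht; rewrite -/S -/M; set t := S / M => hcs ht.
  have et : t ^+ 2 * M = t * S by rewrite expr2 -mulrA ht.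
  rewrite et -mulrA in hcs.
  move: hcs; set ts := t * S => hcs.
  have h1 : ts <= a.
    have : ts <= \sum_(x <- w) x ^+ 2 by timeout 20 lra.
    move=> h2; exact: le_trans h2 hW.
  have -> : S ^+ 2 = M * ts by rewrite /ts expr2 -{1}ht; ring.
  by rewrite ler_pM2l.
have k1 : a / 2 * D ^+ 2 < S ^+ 2.
  by rewrite hSu exprMn ltr_pM2r // exprn_gt0.
have key : D ^+ 2 < 2 * M.
  have k2 : (D ^+ 2) * a < (2 * M) * a.
    move: (lt_le_trans k1 hSM); set X := D ^+ 2 => k.
    have -> : 2 * M * a = 2 * (M * a) by ring.
    have -> : X * a = 2 * (a / 2 * X) by field.
    by rewrite ltr_pM2l.
  by rewrite ltr_pM2r in k2.
move: key; rewrite hM /D -rmorphXn -[2 * _]/(2%:~R * _) -rmorphM ltr_int => key.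
rewrite !expr2 in key.
have e3 : 2 * (2 * d * e + 1) = 4 * (d * e) + 2 by ring.
rewrite e3 in key.
have k4 : (d - e) * (d - e) < 2.
  have -> : (d - e) * (d - e) = (d + e) * (d + e) - 4 * (d * e) by ring.
  by rewrite ltrBlDr [2 + _]addrC.
have h2 : d - e < 2.
  rewrite ltNge; apply/negP => h3.
  have : 4 <= (d - e) * (d - e).
    move: h3; generalize (d - e) => z hz.
    have h5 : 0 <= (z - 2) * (z + 2) by apply: mulr_ge0; [rewrite subr_ge0 | apply: addr_ge0 => //; exact: le_trans hz].
    have h6 : (z - 2) * (z + 2) = z * z - 4 by ring.
    rewrite h6 subr_ge0 in h5; exact: h5.
  move: k4; generalize ((d - e) * (d - e)) => P; clear; timeout 20 lia.
move: h2 hed; clear; timeout 20 lia.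
Qed.
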